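(* For every $w\in A^*$, $$\Big\|\big(d_\ell(\hat p_{n,\ell}(\cdot|w),\bar p_{n,\ell}(\cdot|w))\big)_{\ell=1}^{L}\Big\|_{L,k}\;\le\;\big\|(\mathrm{conf}_\ell(w))_{\ell=1}^{L}\big\|_{L,r}.$$
   Context: Setting: $A$ is a finite alphabet, $A^*$ the set of finite and left-infinite $A$-valued strings; for $w,w'\in A^*$, $w\preceq w'$ means $w$ is a suffix of $w'$. There are $L$ stationary processes $X(\ell)$, $\ell=1,\dots,L$, with $p_\ell(a\mid x)=\Pr(X(\ell)_0=a\mid X(\ell)^{-1}_{-\infty}=x)$, and for each $\ell$ we observe a sample $X_1^n(\ell)$. $N_{k,\ell}(w)$ is the number of occurrences of $w$ in $X_1^k(\ell)$. If $\min_{1\le\ell\le L}N_{n-1,\ell}(w)>0$, the empirical probability is $\hat p_{n,\ell}(a|w)=N_{n,\ell}(wa)/N_{n-1,\ell}(w)$ and the oracle probability is $\bar p_{n,\ell}(a|w)=\frac{1}{N_{n-1,\ell}(w)}\sum_{i=|w|+1}^{n}\mathbf 1\{X^{i-1}_{i-|w|}(\ell)=w\}\,p_\ell(a|X^{i-1}_{-\infty}(\ell))$; otherwise both are set to $1/|A|$. Each $d_\ell:\Delta^A\times\Delta^A\to[0,1]$ is a metric on probability distributions over $A$. For $v\in\mathbb R^L$ and $q\ge1$, $\|v\|_{L,q}=(\frac1L\sum_{\ell=1}^L|v_\ell|^q)^{1/q}$ (and $\|v\|_{L,\infty}=\max_\ell|v_\ell|$). A confidence radius $\mathrm{conf}(w)=(\mathrm{conf}_1(w),\dots,\mathrm{conf}_L(w))$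 with $0\le\mathrm{conf}_\ell(w)\le1$ is given for each $w$, componentwise increasing ($\mathrm{conf}_\ell(w)\le\mathrm{conf}_\ell(w')$ if $w\preceq w'$). The positive (extended) integers $k,r,m$ satisfy $k\le m$ and $r\ge km/(m-k)$, or $k\le r=m=\infty$. Assume the event $$\mathrm{Good}_m=\bigcap_{w\in A^*}\Big\{\Big\|\Big(\tfrac{d_\ell(\bar p_{n,\ell}(\cdot|w),\hat p_{n,\ell}(\cdot|w))}{\mathrm{conf}_\ell(w)}\Big)_{\ell=1}^L\Big\|_{L,m}\le1\ \text{ whenever }\min_{1\le\ell\le L}N_{n-1,\ell}(w)>0\Big\}$$ occurs. *)

(* Defs.v *)
From mathcomp Require Import all_boot all_order all_algebra.
From mathcomp Require Import reals exp.
Set Implicit Arguments. Unset Strict Implicit. Unset Printing Implicit Defensive.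
Import Order.TTheory GRing.Theory Num.Theory.
Local Open Scope ring_scope.

(* inl s : finite string s = [:: w_1; ...; w_j] (w_j is the most recent letter).
   inr x : left-infinite string ... x 2 x 1 x 0  (x 0 is the most recent letter). *)
Definition str (A : finType) := (seq A + (nat -> A))%type.

Definition str_suffix (A : finType) (w w' : str A) : Prop :=
  match w, w' with
  | inl s, inl s' => suffix s s'
  | inl s, inr x => forall i, (i < size s)%N -> nth (x 0%N) s (size s - 1 - i) = x i
  | inr _, inl _ => False
  | inr x, inr y => forall i, x i = y i
  end.

Definition str_app (A : finType) (w : str A) (a : A) : str A :=
  match w with
  | inl s => inl (rcons s a)
  | inr x => inr (fun j => if j is j'.+1 then x j' else a)
  end.

Definition occurs (A : finType) (X : int -> A) (s : seq A) (t : int) : bool :=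
  map (fun j : nat => X (t - (size s)%:Z + 1 + j%:Z)) (iota 0 (size s)) == s.

(* N_k(w): number of occurrences of w in X_1^k, i.e. number of end times t
   with |w| <= t <= k (so that the occurrence lies within positions 1..k).
   A left-infinite string never occurs in a finite sample. *)
Definition Ncount (A : finType) (X : int -> A) (k : nat) (w : str A) : nat :=
  match w with
  | inl s => count (fun t : nat => occurs X s t%:Z) (index_iota (size s) k.+1)
  | inr _ => 0%N
  end.

Definition allpos (A : finType) (L : nat) (X : 'I_L -> int -> A) (n : nat)
  (w : str A) : bool :=
  [forall l, (0 < Ncount (X l) n.-1 w)%N].

Definition past (A : finType) (X : int -> A) (t : int) : nat -> A :=
  fun j => X (t - j%:Z).

Section Estimators.
Variables (R : realType) (A : finType) (L : nat).

Definition unif : {ffun A -> R} := [ffun => (#|A|%:R)^-1].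

Definition phat (X : 'I_L -> int -> A) (n : nat) (w : str A) (l : 'I_L)
  : {ffun A -> R} :=
  if allpos X n w then
    [ffun a => (Ncount (X l) n (str_app w a))%:R / (Ncount (X l) n.-1 w)%:R]
  else unif.

(* oracle probability \bar p_{n,l}(.|w);  p l x a = p_l(a | x) *)
Definition pbar (X : 'I_L -> int -> A) (p : 'I_L -> (nat -> A) -> A -> R)
  (n : nat) (w : str A) (l : 'I_L) : {ffun A -> R} :=
  if allpos X n w then
    match w with
    | inl s =>
      [ffun a => (Ncount (X l) n.-1 w)%:R^-1 *
         \sum_(size s + 1 <= i < n.+1)
            (occurs (X l) s (i%:Z - 1))%:R * p l (past (X l) (i%:Z - 1)) a]
    | inr _ => unif
    end
  else unif.

Definition is_distr (q : {ffun A -> R}) : Prop :=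
  (forall a, 0 <= q a) /\ \sum_a q a = 1.

Definition is_metric01 (d : {ffun A -> R} -> {ffun A -> R} -> R) : Prop :=
  (forall q1 q2, is_distr q1 -> is_distr q2 -> 0 <= d q1 q2 <= 1) /\
  (forall q1 q2, is_distr q1 -> is_distr q2 -> (d q1 q2 = 0 <-> q1 = q2)) /\
  (forall q1 q2, is_distr q1 -> is_distr q2 -> d q1 q2 = d q2 q1) /\
  (forall q1 q2 q3, is_distr q1 -> is_distr q2 -> is_distr q3 ->
      d q1 q3 <= d q1 q2 + d q2 q3).

End Estimators.

(* Some q = the integer q ; None = infinity *)
Definition ext_pos (q : option nat) : Prop :=
  match q with Some q => (0 < q)%N | None => True end.

Definition ext_le (q1 q2 : option nat) : Prop :=
  match q1, q2 with
  | Some a, Some b => (a <= b)%N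
  | _, None => True
  | None, Some _ => False
  end.

Definition ext_inv (R : realType) (q : option nat) : R :=
  match q with Some q => (q%:R)^-1 | None => 0 end.

(* "k <= m and r >= k m /(m - k), or k <= r = m = infinity",
   read as  k <= m  and  1/r <= 1/k - 1/m *)
Definition holder_exps (R : realType) (k r m : option nat) : Prop :=
  (ext_le k m /\ ext_inv R r <= ext_inv R k - ext_inv R m) \/
  (ext_le k r /\ r = None /\ m = None).

Definition Lnorm (R : realType) (L : nat) (q : option nat) (v : 'I_L -> R) : R :=
  match q with
  | Some q => powR ((L%:R)^-1 * \sum_(l < L) `|v l| ^+ q) ((q%:R)^-1)
  | None => \big[Num.max/0]_(l < L) `|v l|
  end.

(* The ratio d/conf is read
   with the conventions 0/0 = 0 and d/0 = +oo for d > 0: hence we require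
   d = 0 wherever conf = 0, and the norm is taken with x/0 = 0. *)
Definition Good (R : realType) (A : finType) (L : nat)
  (X : 'I_L -> int -> A) (p : 'I_L -> (nat -> A) -> A -> R)
  (d : 'I_L -> {ffun A -> R} -> {ffun A -> R} -> R)
  (conf : str A -> 'I_L -> R) (n : nat) (m : option nat) : Prop :=
  forall w : str A, allpos X n w ->
    (forall l, conf w l = 0 -> d l (pbar X p n w l) (phat R X n w l) = 0) /\
    Lnorm m (fun l => d l (pbar X p n w l) (phat R X n w l) / conf w l) <= 1.

(* Main.v *)
Require Import Defs.
From mathcomp Require Import all_boot all_order all_algebra.
From mathcomp Require Import reals exp.
From mathcomp Require Import ring lra zify.
Import Order.TTheory GRing.Theory Num.Theory.
Local Open Scope ring_scope.

Section Anal.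
Variable R : realType.
Implicit Types x y a b : R.

Lemma young2 x y a b : 0 <= x -> 0 <= y -> 0 < a -> 0 < b -> a + b = 1 ->
  x `^ a * y `^ b <= a * x + b * y.
Proof.
move=> x0 y0 a0 b0 ab.
have := @conjugate_powR R (x `^ a) (y `^ b) a^-1 b^-1 (powR_ge0 _ _) (powR_ge0 _ _).
rewrite !invr_gt0 a0 b0 !invrK => /(_ erefl erefl ab).
rewrite -!powRrM !mulfV ?gt_eqF // !powRr1 //.
by rewrite [x * a]mulrC [y * b]mulrC.
Qed.

Lemma young3 x y a b : 0 <= x -> 0 <= y -> 0 < a -> 0 < b -> a + b <= 1 ->
  x `^ a * y `^ b <= a * x + b * y + (1 - a - b).
Proof.
move=> x0 y0 a0 b0; rewrite le_eqVlt => /predU1P[ab|ab].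
  by rewrite -[1 - a - b]addrA -opprD ab subrr addr0; apply: young2.
set s := a + b.
have s0 : 0 < s by rewrite addr_gt0.
have s1 : 0 < 1 - s by rewrite subr_gt0.
set z := x `^ a * y `^ b.
have z0 : 0 <= z by rewrite mulr_ge0 // powR_ge0.
have := @conjugate_powR R z 1 s^-1 (1 - s)^-1 z0 ler01.
rewrite !invr_gt0 s0 s1 !invrK => /(_ erefl erefl).
rewrite addrC subrK => /(_ erefl).
rewrite powR1.
rewrite mulr1 mul1r.
have -> : z `^ s^-1 = x `^ (a / s) * y `^ (b / s).
  by rewrite powRM ?powR_ge0 // -!powRrM.
move=> H; apply: (le_trans H).
have Y := @young2 x y (a / s) (b / s) x0 y0 (divr_gt0 a0 s0) (divr_gt0 b0 s0).
have : a / s + b / s = 1 by rewrite -mulrDl mulfV // gt_eqF.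
move=> /Y {}Y.
rewrite -[1 - a - b]addrA -opprD -/s lerD2r.
rewrite mulrC; apply: le_trans (ler_wpM2l (ltW s0) Y) _.
by rewrite mulrDr !mulrA ![s * _]mulrC !mulfK // gt_eqF.
Qed.
End Anal.

Set Implicit Arguments. Unset Strict Implicit.

Section Mean.
Variable R : realType.
Variable L : nat.
Hypothesis L0 : (0 < L)%N.

Definition mean (f : 'I_L -> R) := L%:R^-1 * \sum_l f l.

Lemma Lgt0 : 0 < L%:R :> R. Proof. by rewrite ltr0n. Qed.

Lemma mean_ge0 f : (forall l, 0 <= f l) -> 0 <= mean f.
Proof. by move=> H; rewrite mulr_ge0 ?invr_ge0 ?ler0n // sumr_ge0. Qed.

Lemma mean_le f g : (forall l, f l <= g l) -> mean f <= mean g.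
Proof. by move=> H; rewrite ler_wpM2l ?invr_ge0 ?ler0n // ler_sum. Qed.

Lemma mean_cst c : mean (fun=> c) = c.
Proof.
by rewrite /mean sumr_const card_ord -[c *+ L]mulr_natl mulrA mulVf ?mul1r // gt_eqF ?Lgt0.
Qed.

Lemma mean_le_cst f C : \sum_l f l <= C * L%:R -> mean f <= C.
Proof.
move=> H; rewrite /mean mulrC ler_pdivrMr ?Lgt0 //.
Qed.

Lemma mean_eq0 f : (forall l, 0 <= f l) -> mean f = 0 -> forall l, f l = 0.
Proof.
move=> f0 /eqP; rewrite /mean mulf_eq0 invr_eq0 pnatr_eq0 eqn0Ngt L0 /= => /eqP H.
by move=> l; have := psumr_eq0P (fun i _ => f0 i) H; apply.
Qed.

Lemma GH (u v : 'I_L -> R) a b : (forall l, 0 <= u l) -> (forall l, 0 <= v l) ->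
  0 < a -> 0 < b -> a + b <= 1 ->
  mean (fun l => u l * v l) <=
  (mean (fun l => u l `^ a^-1)) `^ a * (mean (fun l => v l `^ b^-1)) `^ b.
Proof.
move=> u0 v0 a0 b0 ab.
set U := mean (fun l => u l `^ a^-1); set V := mean (fun l => v l `^ b^-1).
have U0 : 0 <= U by apply: mean_ge0 => l /=; apply: powR_ge0.
have V0 : 0 <= V by apply: mean_ge0 => l /=; apply: powR_ge0.
have RHS0 : 0 <= U `^ a * V `^ b by rewrite mulr_ge0 ?powR_ge0.
have [U00|Upos] := eqVneq U 0.
  have E := mean_eq0 (fun l => powR_ge0 _ _) U00.
  rewrite (_ : mean _ = 0) //; rewrite /mean big1 ?mulr0 // => l _.
  by rewrite (powR_eq0_eq0 (E l)) mul0r.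
have [V00|Vpos] := eqVneq V 0.
  have E := mean_eq0 (fun l => powR_ge0 _ _) V00.
  rewrite (_ : mean _ = 0) //; rewrite /mean big1 ?mulr0 // => l _.
  by rewrite (powR_eq0_eq0 (E l)) mulr0.
have Ug : 0 < U by rewrite lt_def Upos U0.
have Vg : 0 < V by rewrite lt_def Vpos V0.
set x := fun l => u l `^ a^-1 / U.
set y := fun l => v l `^ b^-1 / V.
have x0 l : 0 <= x l by rewrite divr_ge0 ?powR_ge0 ?ltW.
have y0 l : 0 <= y l by rewrite divr_ge0 ?powR_ge0 ?ltW.
have ux l : u l = U `^ a * x l `^ a.
  by rewrite -powRM ?(ltW Ug) ?x0 // /x mulrCA mulfV ?gt_eqF // mulr1 -powRrM mulVf ?gt_eqF // powRr1.
have vy l : v l = V `^ b * y l `^ b.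
  by rewrite -powRM ?(ltW Vg) ?y0 // /y mulrCA mulfV ?gt_eqF // mulr1 -powRrM mulVf ?gt_eqF // powRr1.
have Sx : \sum_l x l = L%:R.
  rewrite /x -mulr_suml (_ : \sum_l _ = U * L%:R); last first.
    by rewrite /U /mean mulrAC mulVf ?mul1r // gt_eqF // Lgt0.
  by rewrite mulrAC mulfV ?mul1r // gt_eqF.
have Sy : \sum_l y l = L%:R.
  rewrite /y -mulr_suml (_ : \sum_l _ = V * L%:R); last first.
    by rewrite /V /mean mulrAC mulVf ?mul1r // gt_eqF // Lgt0.
  by rewrite mulrAC mulfV ?mul1r // gt_eqF.
apply: mean_le_cst.
apply: (@le_trans _ _ (\sum_l (U `^ a * V `^ b) * (a * x l + b * y l + (1 - a - b)))).
  apply: ler_sum => l _; rewrite ux vy mulrACA ler_wpM2l //.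
  exact: young3.
rewrite -mulr_sumr ler_wpM2l // big_split /= big_split /= -!mulr_sumr Sx Sy sumr_const card_ord.
rewrite -[(1 - a - b) *+ L]mulr_natr -!mulrDl (_ : a + b + (1 - a - b) = 1) ?mul1r //; lra.
Qed.

Lemma PM (u : 'I_L -> R) a : (forall l, 0 <= u l) -> 0 < a -> a <= 1 ->
  mean u <= (mean (fun l => u l `^ a^-1)) `^ a.
Proof.
move=> u0 a0; rewrite le_eqVlt => /predU1P[->|a1].
  rewrite invr1 powRr1; last by apply: mean_ge0 => l /=; apply: powR_ge0.
  by apply: mean_le => l; rewrite powRr1.
have a1' : 0 < 1 - a by rewrite subr_gt0.
have a2' : a + (1 - a) <= 1 by rewrite addrC subrK.
have := @GH u (fun=> 1) a (1 - a) u0 (fun=> ler01) a0 a1' a2'.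
rewrite (_ : mean (fun l => u l * 1) = mean u); last by rewrite /mean; congr (_ * _); apply: eq_bigr => l _; rewrite mulr1.
by rewrite powR1 mean_cst powR1 mulr1.
Qed.
End Mean.

Section Comb.
Variable A : finType.

Lemma occurs_rcons (X : int -> A) s a (t : int) :
  occurs X (rcons s a) t = occurs X s (t - 1) && (X t == a).
Proof.
rewrite /occurs size_rcons -addn1 iotaD map_cat /= cats1 eqseq_rcons.
congr (_ && _).
  congr (_ == _); apply: eq_map => j; congr X.
  rewrite PoszD; ring.
rewrite add0n PoszD; congr (X _ == _); ring.
Qed.

Lemma sum_count_split (I : seq nat) (Q : pred nat) (g : nat -> A) :
  (\sum_(a : A) count (fun t => Q t && (g t == a)) I = count Q I)%N.
Proof.
elim: I => [|t I IH]; first by rewrite big1.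
rewrite /= big_split /= IH; congr (_ + _)%N.
case: (Q t) => /=; last by rewrite big1.
rewrite (bigD1 (g t)) //= eqxx big1 // => a /negbTE; rewrite eq_sym => ->.
by [].
Qed.

Lemma iotaS1 m k : iota m.+1 k = map succn (iota m k).
Proof. by rewrite -add1n iotaDl. Qed.

Lemma sumN (Y : int -> A) s n : (0 < n)%N ->
  (\sum_(a : A) Ncount Y n (str_app (inl s) a) = Ncount Y n.-1 (inl s))%N.
Proof.
move=> n0.
have E a : Ncount Y n (str_app (inl s) a) =
    count (fun t : nat => occurs Y s (t%:Z - 1) && (Y t%:Z == a)) (index_iota (size s).+1 n.+1).
  by rewrite /= size_rcons -addn1 addn1; apply: eq_count => t; exact: occurs_rcons.
rewrite (eq_bigr _ (fun a _ => E a)) sum_count_split /= prednK // /index_iota -addn1 addn1 subSS iotaS1 count_map.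
by apply: eq_count => t /=; rewrite -addn1 PoszD addrK.
Qed.

Lemma sum_natr_count (R : realType) (I : seq nat) (P : pred nat) :
  \sum_(i <- I) (P i)%:R = (count P I)%:R :> R.
Proof.
elim: I => [|t I IH]; first by rewrite big_nil.
by rewrite big_cons IH /= natrD.
Qed.
End Comb.

Lemma allpos_inl (A : finType) L (X : 'I_L -> int -> A) n w : (0 < L)%N -> allpos X n w ->
  exists s, w = inl s.
Proof.
move=> L0; case: w => [s|x] H; first by exists s.
by have := forallP H (Ordinal L0).
Qed.

Lemma phat_distr (R : realType) (A : finType) L (X : 'I_L -> int -> A) n w l :
  (0 < n)%N -> allpos X n w -> is_distr (phat R X n w l).
Proof.
move=> n0 H; have Npos := forallP H l.
rewrite /phat H; split => [a|]; first by rewrite ffunE divr_ge0.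
under eq_bigr => a _ do rewrite ffunE.
rewrite -mulr_suml -natr_sum.
case: w H Npos => [s|x] H Npos; last by [].
by rewrite sumN // mulfV // pnatr_eq0 -lt0n.
Qed.

Lemma pbar_distr (R : realType) (A : finType) L (X : 'I_L -> int -> A)
  (p : 'I_L -> (nat -> A) -> A -> R) n w l :
  (forall l x, is_distr [ffun a => p l x a]) ->
  (0 < n)%N -> allpos X n w -> is_distr (pbar X p n w l).
Proof.
move=> pd n0 H; have Npos := forallP H l.
have p0 x a : 0 <= p l x a by have [h _] := pd l x; have := h a; rewrite ffunE.
have p1 x : \sum_a p l x a = 1.
  by have [_ h] := pd l x; rewrite -h; apply: eq_bigr => a _; rewrite ffunE.
case: w H Npos => [s|x] H Npos; last by [].
rewrite /pbar H; split => [a|].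
  rewrite ffunE mulr_ge0 ?invr_ge0 ?ler0n //; apply: sumr_ge0 => i _.
  by rewrite mulr_ge0 ?ler0n.
under eq_bigr => a _ do rewrite ffunE.
rewrite -mulr_sumr exchange_big /=.
under eq_bigr => i _ do rewrite -mulr_sumr p1 mulr1.
rewrite /index_iota addn1 subSS iotaS1 big_map sum_natr_count prednK //.
rewrite (_ : count _ (iota (size s) (n - size s)) = count (fun t : nat => occurs (X l) s t%:Z) (iota (size s) (n - size s))).
  by rewrite mulVf // pnatr_eq0 -lt0n -{1}(prednK n0).
by apply: eq_count => t /=; rewrite -addn1 PoszD addrK.
Qed.

Local Opaque powR.

Section Main.
Variable R : realType.
Variable L : nat.
Hypothesis L0 : (0 < L)%N.

Definition bmax (f : 'I_L -> R) := \big[Num.max/0]_(l < L) f l.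

Lemma lemaxl (x y : R) : x <= Num.max x y. Proof. by rewrite le_max lexx. Qed.
Lemma lemaxr (x y : R) : y <= Num.max x y. Proof. by rewrite le_max lexx orbT. Qed.
Lemma maxle (x y B : R) : x <= B -> y <= B -> Num.max x y <= B.
Proof. by rewrite ge_max => -> ->. Qed.

Lemma bmax_ge0 f : 0 <= bmax f.
Proof. by rewrite /bmax; elim/big_rec: _ => // i x _ Hx; apply: le_trans Hx (lemaxr _ _). Qed.

Lemma le_bmax f l : f l <= bmax f.
Proof. by rewrite /bmax (bigD1 l) //=; apply: lemaxl. Qed.

Lemma bmax_le f B : 0 <= B -> (forall l, f l <= B) -> bmax f <= B.
Proof. by move=> B0 H; rewrite /bmax; elim/big_rec: _ => // i x _ Hx; apply: maxle. Qed.

Lemma LnormS (f : 'I_L -> R) q : (forall l, 0 <= f l) ->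
  Lnorm (Some q) f = (mean (fun l => f l `^ q%:R)) `^ q%:R^-1.
Proof.
move=> f0; rewrite /= /mean; congr (_ `^ _); congr (_ * _); apply: eq_bigr => l _.
by rewrite ger0_norm // powR_mulrn.
Qed.

Lemma LnormN (f : 'I_L -> R) : (forall l, 0 <= f l) -> Lnorm None f = bmax f.
Proof. by move=> f0; rewrite /= /bmax; apply: eq_bigr => l _; rewrite ger0_norm. Qed.

Lemma Lnorm_ge0 q (f : 'I_L -> R) : 0 <= Lnorm q f.
Proof.
case: q => [q|] /=; first exact: powR_ge0.
exact: (bmax_ge0 (fun l => `|f l|)).
Qed.

Lemma finish (X Y K s : R) : 0 < K -> 0 <= X -> 0 <= Y -> X <= Y `^ (K * s) ->
  X `^ K^-1 <= Y `^ s.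
Proof.
move=> K0 X0 Y0 H.
have Ki : 0 <= K^-1 by rewrite invr_ge0 ltW.
have := @ge0_ler_powR R K^-1 Ki X (Y `^ (K * s)).
rewrite !nnegrE powR_ge0 => /(_ X0 isT H) H2; apply: (le_trans H2).
by rewrite -powRrM mulrC mulrA mulVf ?mul1r // gt_eqF.
Qed.

Lemma finish1 (X Z K : R) : 0 < K -> 0 <= X -> 0 <= Z -> X <= Z `^ K -> X `^ K^-1 <= Z.
Proof.
move=> K0 X0 Z0 H; rewrite -[Z in _ <= Z]powRr1 //; apply: finish => //.
by rewrite mulr1.
Qed.

Variables (D c : 'I_L -> R).
Hypothesis D0 : forall l, 0 <= D l.
Hypothesis c0 : forall l, 0 <= c l.
Hypothesis Dc : forall l, c l = 0 -> D l = 0.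

Let e l := D l / c l.
Lemma e0 l : 0 <= e l. Proof. by rewrite divr_ge0. Qed.
Lemma Dec l : D l = e l * c l.
Proof.
rewrite /e; have [/Dc ->|cn] := eqVneq (c l) 0; first by rewrite !mul0r.
by rewrite divfK.
Qed.

Lemma powle (x y p : R) : 0 <= p -> 0 <= x -> x <= y -> x `^ p <= y `^ p.
Proof.
move=> p0 x0 xy; have y0 : 0 <= y by apply: le_trans xy.
by apply: (@ge0_ler_powR R p p0 x y); rewrite ?nnegrE.
Qed.

Lemma powle1 (x p : R) : 0 <= p -> 0 <= x -> x <= 1 -> x `^ p <= 1.
Proof. by move=> p0 x0 x1; have := powle p0 x0 x1; rewrite powR1. Qed.

Lemma unroot (X M : R) : 0 < M -> 0 <= X -> X `^ M^-1 <= 1 -> X <= 1.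
Proof.
move=> M0 X0 H; have E : X = (X `^ M^-1) `^ M by rewrite -powRrM mulVf ?powRr1 // lt0r_neq0.
rewrite E.
apply: powle1 => //. exact: ltW. exact: powR_ge0. Qed.

Lemma powRK (x K Q : R) : K != 0 -> (x `^ K) `^ ((K / Q)^-1) = x `^ Q.
Proof. by move=> K0; rewrite -powRrM invfM invrK mulrA mulfV ?mul1r. Qed.

Lemma eq_mean (f g : 'I_L -> R) : (forall l, f l = g l) -> mean f = mean g.
Proof. by move=> H; rewrite /mean; congr (_ * _); apply: eq_bigr => l _. Qed.

Lemma meanZ (a : R) (f : 'I_L -> R) : mean (fun l => a * f l) = a * mean f.
Proof. by rewrite /mean -mulr_sumr mulrCA. Qed.

Lemma caseInf k : ext_pos k -> (forall l, D l <= c l) -> Lnorm k D <= Lnorm None c.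
Proof.
move=> kp Dlec; rewrite (LnormN c0); case: k kp => [k|] kp; last first.
  rewrite LnormN //; apply: bmax_le; first exact: bmax_ge0.
  by move=> l; apply: le_trans (Dlec l) (le_bmax _ _).
have K0 : 0 < k%:R :> R by rewrite ltr0n.
rewrite (LnormS _ D0); apply: finish1 => //; first by apply: mean_ge0 => l; apply: powR_ge0.
  exact: bmax_ge0.
rewrite -[_ `^ _](mean_cst L0); apply: mean_le => l.
by apply: powle; [exact: ltW | exact: D0 | apply: le_trans (Dlec l) (le_bmax _ _)].
Qed.

Lemma caseMinf k r : (0 < k)%N -> (k <= r)%N -> (forall l, D l <= c l) ->
  Lnorm (Some k) D <= Lnorm (Some r) c.
Proof.
move=> kp kr Dlec.
have K0 : 0 < k%:R :> R by rewrite ltr0n.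
have R0 : 0 < r%:R :> R by rewrite ltr0n (leq_trans kp kr).
rewrite (LnormS _ D0) (LnormS _ c0); apply: finish => //; first by apply: mean_ge0 => l; apply: powR_ge0.
  by apply: mean_ge0 => l; apply: powR_ge0.
apply: (@le_trans _ _ (mean (fun l => c l `^ k%:R))).
  by apply: mean_le => l; apply: powle => //; exact: ltW.
have a0 : 0 < k%:R / r%:R :> R by rewrite divr_gt0.
have a1 : k%:R / r%:R <= 1 :> R by rewrite ler_pdivrMr // mul1r ler_nat.
have H := PM L0 (fun l => powR_ge0 (c l) k%:R) a0 a1.
rewrite (@eq_mean (fun l => (c l `^ k%:R) `^ (k%:R / r%:R)^-1) (fun l => c l `^ r%:R)) in H.
  exact: H.
by move=> l; rewrite powRK // gt_eqF.
Qed.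

Lemma caseRinf k m : (0 < k)%N -> (k <= m)%N -> Lnorm (Some m) e <= 1 ->
  Lnorm (Some k) D <= Lnorm None c.
Proof.
move=> kp km He.
have K0 : 0 < k%:R :> R by rewrite ltr0n.
have M0 : 0 < m%:R :> R by rewrite ltr0n (leq_trans kp km).
rewrite (LnormS _ e0) in He.
have Em : mean (fun l => e l `^ m%:R) <= 1.
  by apply: unroot He => //; apply: mean_ge0 => l; apply: powR_ge0.
rewrite (LnormS _ D0) (LnormN c0).
apply: finish1 => //; first by apply: mean_ge0 => l; apply: powR_ge0.
  exact: bmax_ge0.
apply: (@le_trans _ _ (mean (fun l => bmax c `^ k%:R * e l `^ k%:R))).
  apply: mean_le => l; rewrite Dec powRM ?e0 // mulrC.
  by apply: ler_wpM2r; [exact: powR_ge0 | apply: powle; [exact: ltW | exact: c0 | exact: le_bmax]].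
rewrite meanZ; apply: ler_piMr; first exact: powR_ge0.
have a0 : 0 < k%:R / m%:R :> R by rewrite divr_gt0.
have a1 : k%:R / m%:R <= 1 :> R by rewrite ler_pdivrMr // mul1r ler_nat.
have H := PM L0 (fun l => powR_ge0 (e l) k%:R) a0 a1.
rewrite (@eq_mean (fun l => (e l `^ k%:R) `^ (k%:R / m%:R)^-1) (fun l => e l `^ m%:R)) in H.
  apply: (le_trans H); apply: powle1 => //. exact: ltW.
  by apply: mean_ge0 => l; apply: powR_ge0.
by move=> l; rewrite powRK // gt_eqF.
Qed.

Lemma GH' (u v : 'I_L -> R) (K M Q : R) : (forall l, 0 <= u l) -> (forall l, 0 <= v l) ->
  0 < K -> 0 < M -> 0 < Q -> K / M + K / Q <= 1 ->
  mean (fun l => u l `^ K * v l `^ K) <=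
  (mean (fun l => u l `^ M)) `^ (K / M) * (mean (fun l => v l `^ Q)) `^ (K / Q).
Proof.
move=> u0 v0 K0 M0 Q0 ab.
have H := GH L0 (fun l => powR_ge0 (u l) K) (fun l => powR_ge0 (v l) K)
  (divr_gt0 K0 M0) (divr_gt0 K0 Q0) ab.
have E1 : mean (fun l => (u l `^ K) `^ (K / M)^-1) = mean (fun l => u l `^ M).
  by apply: eq_mean => l; rewrite powRK // gt_eqF.
have E2 : mean (fun l => (v l `^ K) `^ (K / Q)^-1) = mean (fun l => v l `^ Q).
  by apply: eq_mean => l; rewrite powRK // gt_eqF.
by rewrite -E1 -E2.
Qed.

Lemma caseFin k r m : (0 < k)%N -> (0 < r)%N -> (0 < m)%N ->
  r%:R^-1 <= k%:R^-1 - m%:R^-1 :> R -> Lnorm (Some m) e <= 1 ->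
  Lnorm (Some k) D <= Lnorm (Some r) c.
Proof.
move=> kp rp mp hk He.
have K0 : 0 < k%:R :> R by rewrite ltr0n.
have M0 : 0 < m%:R :> R by rewrite ltr0n.
have R0 : 0 < r%:R :> R by rewrite ltr0n.
rewrite (LnormS _ e0) in He.
have Em : mean (fun l => e l `^ m%:R) <= 1.
  by apply: unroot He => //; apply: mean_ge0 => l; apply: powR_ge0.
rewrite (LnormS _ D0) (LnormS _ c0).
apply: finish => //; first by apply: mean_ge0 => l; apply: powR_ge0.
  by apply: mean_ge0 => l; apply: powR_ge0.
rewrite (@eq_mean (fun l => D l `^ k%:R) (fun l => e l `^ k%:R * c l `^ k%:R)); last first.
  by move=> l; rewrite Dec powRM ?e0.
have a0 : 0 < k%:R / m%:R :> R by rewrite divr_gt0.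
have b0 : 0 < k%:R / r%:R :> R by rewrite divr_gt0.
have ab : k%:R / m%:R + k%:R / r%:R <= 1 :> R.
  have h2 : m%:R^-1 + r%:R^-1 <= k%:R^-1 :> R by lra.
  rewrite -mulrDr; apply: (le_trans (ler_wpM2l (ltW K0) h2)); by rewrite mulfV // (lt0r_neq0 K0).
have H := GH' e0 c0 K0 M0 R0 ab.
apply: (le_trans H); apply: ler_piMl; first exact: powR_ge0.
apply: powle1 => //. exact: ltW.
by apply: mean_ge0 => l; apply: powR_ge0.
Qed.
Lemma Dlec_of : Lnorm None e <= 1 -> forall l, D l <= c l.
Proof.
rewrite (LnormN e0) => H l; rewrite Dec; apply: ler_piMl; first exact: c0.
exact: le_trans (le_bmax _ l) H.
Qed.

Lemma main_abs k r m : ext_pos k -> ext_pos r -> ext_pos m -> holder_exps R k r m ->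
  Lnorm m (fun l => D l / c l) <= 1 -> Lnorm k D <= Lnorm r c.
Proof.
move=> kp rp mp [[km hr]|[kr [-> ->]]] He; last exact: caseInf kp (Dlec_of He).
case: m mp km hr He => [m|] mp km hr He.
  case: k kp km hr => [k|] kp km hr; last by [].
  case: r rp hr => [r|] rp hr; first exact: caseFin kp rp mp hr He.
  exact: caseRinf kp km He.
have Dl := Dlec_of He.
case: r rp hr => [r|] rp hr; last exact: caseInf kp Dl.
case: k kp km hr => [k|] kp km /= hr.
  rewrite /= in kp rp.
  have kr : (k <= r)%N.
    by move: hr; rewrite subr0 lef_pV2 ?posrE ?ltr0n // => h; rewrite -(ler_nat R).
  exact: (caseMinf kp kr Dl).
by move: hr; rewrite subr0 leNgt invr_gt0 ltr0n rp.
Qed.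
End Main.

Lemma Lnorm_ext (R : realType) L q (f g : 'I_L -> R) : (forall l, f l = g l) -> Lnorm q f = Lnorm q g.
Proof.
move=> H; case: q => [q|]; rewrite /Lnorm.
  by congr (_ `^ _); congr (_ * _); apply: eq_bigr => l _; rewrite H.
by apply: eq_bigr => l _; rewrite H.
Qed.

Lemma Lnorm0 (R : realType) L q : ext_pos q -> Lnorm q (fun _ : 'I_L => 0 : R) = 0.
Proof.
case: q => [q|] qp; rewrite /Lnorm.
  rewrite big1 ?mulr0 ?powR0 // => [|l _]; last by rewrite normr0 expr0n gtn_eqF.
  by rewrite invr_eq0 pnatr_eq0 -lt0n.
by elim/big_rec: _ => // i x _ ->; rewrite normr0 maxxx.
Qed.

Lemma unif_distr (R : realType) (A : finType) : (0 < #|A|)%N -> is_distr (unif R A).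
Proof.
move=> A0; split => [a|]; first by rewrite ffunE invr_ge0 ler0n.
under eq_bigr => a _ do rewrite ffunE.
by rewrite sumr_const -[_ *+ _]mulr_natl (_ : #|xpredT| = #|A|) // mulfV // pnatr_eq0 -lt0n.
Qed.

Theorem theorem3p1 (R : realType) (A : finType) (L n : nat)
  (X : 'I_L -> int -> A) (p : 'I_L -> (nat -> A) -> A -> R)
  (d : 'I_L -> {ffun A -> R} -> {ffun A -> R} -> R)
  (conf : str A -> 'I_L -> R) (k r m : option nat) :
  (0 < #|A|)%N -> (0 < L)%N -> (0 < n)%N ->
  (forall l x, is_distr [ffun a => p l x a]) ->
  (forall l, is_metric01 (d l)) ->
  (forall w l, 0 <= conf w l <= 1) ->
  (forall w w' l, str_suffix w w' -> conf w l <= conf w' l) ->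
  ext_pos k -> ext_pos r -> ext_pos m ->
  holder_exps R k r m ->
  Good X p d conf n m ->
  forall w : str A,
    Lnorm k (fun l => d l (phat R X n w l) (pbar X p n w l))
      <= Lnorm r (fun l => conf w l).
Proof.
move=> A0 L0 n0 pd dm cb _ kp rp mp hk G w.
have c0 l : 0 <= conf w l by have /andP[] := cb w l.
case ap: (allpos X n w); last first.
  rewrite (@Lnorm_ext _ _ _ _ (fun _ => 0)); first by rewrite Lnorm0 // Lnorm_ge0.
  move=> l; rewrite /phat /pbar ap.
  have [_ [h _]] := dm l.
  have hu := @unif_distr R A A0.
  exact: (proj2 (h (unif R A) (unif R A) hu hu) erefl).
have [Gc Gn] := G w ap.
have hd l := phat_distr R l n0 ap.
have bd l := pbar_distr l pd n0 ap.
have sym l : d l (phat R X n w l) (pbar X p n w l) = d l (pbar X p n w l) (phat R X n w l).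
  by have [_ [_ [h _]]] := dm l; apply: h.
have D0 l : 0 <= d l (phat R X n w l) (pbar X p n w l).
  by have [h _] := dm l; have /andP[] := h _ _ (hd l) (bd l).
apply: (main_abs L0 D0 c0) kp rp mp hk _.
  by move=> l /Gc; rewrite sym.
by rewrite (@Lnorm_ext _ _ _ _ _ (fun l => congr1 (fun x => x / conf w l) (sym l))).

Qed.
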